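(* Let $\mathcal{Y}=\{1,\dots,C\}$ be a finite label set and let $\Delta$ denote the set of probability distributions on $\mathcal{Y}$. Let $K\ge 1$, let $\mathcal{D}_1,\dots,\mathcal{D}_K$ be pairwise disjoint measurable subsets of an input space $\mathcal{X}$, and for each $k$ let $P_k$ be a probability measure on $\mathcal{X}$ with $P_k(\mathcal{D}_k)=1$. Let $q_1,\dots,q_K\ge 0$ with $\sum_{k=1}^K q_k=1$ and $P=\sum_{k=1}^K q_kP_k$. Let $\Phi^*:\mathcal{X}\to\Delta$ be measurable, and let $\Phi(\cdot;w)$, $\Phi(\cdot;w_1),\dots,\Phi(\cdot;w_K)$ be measurable maps $\mathcal{X}\to\Delta$ (a global model with parameter $w$ and local models with parameters $w_k$). Let $\delta(p,q)=\sup_{A\subseteq\mathcal{Y}}|p(A)-q(A)|$ be the total variation distance and define $\delta^\dagger(p,q):=\delta(p,q)^2$. Then $$\int \delta^\dagger(\Phi^*(x),\Phi(x;w))\,P(dx)\le L_1'+L_2',$$ where $$L_1'=\sum_{k=1}^K q_k\int_{\mathcal{D}_k} D_{KL}(\Phi^*(x)\,\|\,\Phi(x;w_k))\,P_k(dx),\qquad L_2'=\sum_{k=1}^K q_k\int_{\mathcal{D}_k} D_{KL}(\Phi(x;w_k)\,\|\,\Phi(x;w))\,P_k(dx),$$ and $D_{KL}$ denotes the Kullback–Leibler divergence (with values in $[0,\infty]$).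
   Context: This is the federated learning setting: client $k$ holds private data $\mathcal{D}_k$ drawn from distribution $P_k$, $q_k$ is the probability that a sample comes from client $k$, and $P$ is the distribution of the whole data. $\Phi^*$ is the ground-truth map, $\Phi(\cdot;w_k)$ the local models and $\Phi(\cdot;w)$ the global model, all of the same architecture and outputting probability vectors. *)

(* Defs.v *)
From HB Require Import structures.
From mathcomp Require Import all_boot all_order all_algebra.
From mathcomp Require Import all_classical all_reals all_analysis.
Set Implicit Arguments. Unset Strict Implicit. Unset Printing Implicit Defensive.
Import Order.TTheory GRing.Theory Num.Theory.
Import numFieldNormedType.Exports.
Local Open Scope classical_set_scope.
Local Open Scope ring_scope.

Definition is_prob_vec (R : realType) (C : nat) (p : 'I_C -> R) : Prop :=
  (forall i, 0 <= p i) /\ \sum_(i < C) p i = 1.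

Definition tv_dist (R : realType) (C : nat) (p q : 'I_C -> R) : R :=
  \big[Num.max/0]_(A : {set 'I_C}) `|\sum_(i in A) p i - \sum_(i in A) q i|.

Definition tv_dagger (R : realType) (C : nat) (p q : 'I_C -> R) : R :=
  tv_dist p q ^+ 2.

Definition kl_term (R : realType) (a b : R) : \bar R :=
  if a == 0 then 0%E
  else if b == 0 then +oo%E
  else (a * ln (a / b))%:E.

Definition KL (R : realType) (C : nat) (p q : 'I_C -> R) : \bar R :=
  (\sum_(i < C) kl_term (p i) (q i))%E.

(* Main.v *)
Require Import Defs.
From HB Require Import structures.
From mathcomp Require Import all_boot all_order all_algebra.
From mathcomp Require Import all_classical all_reals all_analysis.
From mathcomp Require Import measurable_realfun.
From mathcomp Require Import ring lra.
Import Order.TTheory GRing.Theory Num.Theory.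
Import numFieldNormedType.Exports.
Local Open Scope classical_set_scope.
Local Open Scope ring_scope.

Set Implicit Arguments. Unset Strict Implicit.
Section S.
Variable R : realType.

Lemma is_deriveV1 (f : R -> R) (x df : R) : f x != 0 -> is_derive x 1 f df ->
  is_derive x 1 (fun y => (f y)^-1) (- (f x)^-2 * df).
Proof.
move=> fx0 H; apply: DeriveDef; first exact: derivableV.
by rewrite deriveV //; have [_ ->] := H.
Qed.
Lemma is_deriveZ1 (f : R -> R) (k x df : R) : is_derive x 1 f df ->
  is_derive x 1 (fun y => k * f y) (k * df).
Proof. move=> H; exact: (is_deriveZ k H). Qed.
Lemma is_deriveD1 (f h : R -> R) (x df dh : R) : is_derive x 1 f df -> is_derive x 1 h dh ->
  is_derive x 1 (fun y => f y + h y) (df + dh).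
Proof. move=> H1 H2; exact: (is_deriveD H1 H2). Qed.
Lemma is_deriveB1 (f h : R -> R) (x df dh : R) : is_derive x 1 f df -> is_derive x 1 h dh ->
  is_derive x 1 (fun y => f y - h y) (df - dh).
Proof. move=> H1 H2; exact: (is_deriveB H1 H2). Qed.
Definition g (t : R) := ln t + (4 * t)^-1 + 27 / 4 * (t + 2)^-1 - 5 / 2.
Lemma g_der (t : R) : 0 < t -> is_derive t 1 g (t^-1 - (4 * t ^+ 2)^-1 - 27 / 4 * ((t+2)^+2)^-1).
Proof.
move=> t0.
have d1 := is_derive1_ln t0.
have d2 : is_derive t 1 (fun y : R => (4 * y)^-1) (- (4 * t)^-2 * (4 * 1)).
  apply: is_deriveV1; first by rewrite mulf_neq0 // gt_eqF.
have d3 : is_derive t 1 (fun y : R => 27 / 4 * (y + 2)^-1) (27/4 * (- (t + 2)^-2 * (1 + 0))).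
  apply: (@is_deriveZ1 (fun y => (y + 2)^-1)).
  apply: is_deriveV1; first by rewrite gt_eqF // ltr_wpDl // ltW.
have := is_deriveB1 (is_deriveD1 (is_deriveD1 d1 d2) d3) (is_derive_cst (5/2 : R) t 1).
have tn0 : t != 0 by rewrite gt_eqF.
have t2n0 : t + 2 != 0 by rewrite gt_eqF // ltr_wpDl // ltW.
suff -> : t^-1 - (4 * t ^+ 2)^-1 - 27 / 4 / (t + 2) ^+ 2 =
  t^-1 + - (4 * t) ^- 2 * (4 * 1) + 27 / 4 * (- (t + 2) ^- 2 * (1 + 0)) - 0 by [].
by field; rewrite t2n0 tn0.
Qed.
Lemma g_der_val (t : R) : 0 < t ->
  t^-1 - (4 * t ^+ 2)^-1 - 27 / 4 / (t + 2) ^+ 2 = (t - 1) ^+ 3 / (t ^+ 2 * (t + 2) ^+ 2).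
Proof.
move=> t0; have tn0 : t != 0 by rewrite gt_eqF.
have t2n0 : t + 2 != 0 by rewrite gt_eqF // ltr_wpDl // ltW.
by field; rewrite t2n0 tn0.
Qed.

Lemma g_ge0 (t : R) : 0 < t -> 0 <= g t.
Proof.
move=> t0.
have g1 : g 1 = 0 by rewrite /g ln1; field.
have dg x : 0 < x -> derivable g x 1 by move=> x0; have [] := g_der x0.
have dgv x : 0 < x -> derive1 g x = (x - 1) ^+ 3 / (x ^+ 2 * (x + 2) ^+ 2).
  by move=> x0; rewrite derive1E; have [_ ->] := g_der x0; rewrite g_der_val.
have [t1|t1] := leP 1 t.
  rewrite -g1; apply: (@ger0_derive1_ndecr _ g 1 t) => //.
  - by move=> x; rewrite in_itv /= => /andP [x1 _]; apply: dg; lra.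
  - move=> x; rewrite in_itv /= => /andP [x1 _]; rewrite dgv; last by lra.
    by apply: divr_ge0; [apply: exprn_ge0; lra|
       apply: mulr_ge0; apply: exprn_ge0; lra].
  - apply: derivable_within_continuous => x; rewrite in_itv /= => /andP [x1 _].
    by apply: dg; lra.
rewrite -g1; apply: (@ler0_derive1_nincr _ g t 1) => //; last exact: ltW.
  - by move=> x; rewrite in_itv /= => /andP [x1 _]; apply: dg; lra.
  - move=> x; rewrite in_itv /= => /andP [x1 x2]; rewrite dgv; last by lra.
    apply: mulr_le0_ge0; last by rewrite invr_ge0; apply: mulr_ge0; apply: exprn_ge0; lra.
    have : x - 1 < 0 by lra.
    move: (x - 1) => y y0; rewrite exprS; apply: mulr_le0_ge0; [exact: ltW | exact: sqr_ge0].
  - apply: derivable_within_continuous => x; rewrite in_itv /= => /andP [x1 _].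
    by apply: dg; lra.
Qed.

Lemma ln_lb (a b : R) : 0 < a -> 0 < b ->
  (a - b) * (5 * a + b) / (2 * (a + 2 * b)) <= a * ln (a / b).
Proof.
move=> a0 b0.
have t0 : 0 < a / b by apply: divr_gt0.
have := g_ge0 t0; rewrite /g => H.
have an0 : a != 0 by rewrite gt_eqF.
have bn0 : b != 0 by rewrite gt_eqF.
have abn0 : a + 2 * b != 0 by rewrite gt_eqF //; lra.
have abn0' : a / b + 2 != 0 by rewrite gt_eqF //; lra.
have -> : (a - b) * (5 * a + b) / (2 * (a + 2 * b)) =
   a * (5 / 2 - (4 * (a / b))^-1 - 27 / 4 / (a / b + 2)).
  by field; rewrite abn0 bn0 an0.
apply: ler_wpM2l; first exact: ltW.
lra.
Qed.

Lemma kl_term_ge (a b : R) : 0 <= a -> 0 <= b ->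
  (((a - b) * (5 * a + b) / (2 * (a + 2 * b)))%:E <= kl_term a b)%E.
Proof.
move=> a0 b0; rewrite /kl_term.
have [->|an0] := eqVneq a 0.
  rewrite lee_fin; apply: mulr_le0_ge0.
    by rewrite sub0r mulr0 !add0r mulNr oppr_le0 mulr_ge0.
  by rewrite invr_ge0; apply: mulr_ge0 => //; lra.
have [->|bn0] := eqVneq b 0; first by rewrite leey.
rewrite lee_fin; apply: ln_lb; by rewrite lt_def ?an0 ?bn0.
Qed.

Lemma amgm (x w c : R) : 0 < c -> 0 <= w -> (w = 0 -> x = 0) ->
  `|x| <= x ^+ 2 / w / (2 * c) + c * w / 2.
Proof.
move=> c0 w0 wx.
have [w00|wn0] := eqVneq w 0.
  by rewrite (wx w00) w00 normr0 invr0 !mulr0 !mul0r addr0.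
have wp : 0 < w by rewrite lt_def wn0.
have cn0 : c != 0 by rewrite gt_eqF.
have -> : x ^+ 2 / w / (2 * c) + c * w / 2 = `|x| + (`|x| - c * w) ^+ 2 / (2 * c * w).
  rewrite -(real_normK (num_real x)). field. by rewrite wn0 cn0.
rewrite lerDl; apply: divr_ge0; first exact: sqr_ge0.
by apply: mulr_ge0 => //; apply: mulr_ge0 => //; lra.
Qed.

Lemma sum_amgm (C : nat) (x w : 'I_C -> R) (c : R) : 0 < c ->
  (forall i, 0 <= w i) -> (forall i, w i = 0 -> x i = 0) ->
  \sum_i `|x i| <= (\sum_i (x i ^+ 2 / w i)) / (2 * c) + c * (\sum_i w i) / 2.
Proof.
move=> c0 w0 wx.
rewrite mulr_sumr !mulr_suml -big_split /=.
apply: ler_sum => i _; apply: amgm => //; exact: wx.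
Qed.

Lemma cs_bound (C : nat) (x w : 'I_C -> R) :
  (forall i, 0 <= w i) -> (forall i, w i = 0 -> x i = 0) -> \sum_i w i = 3 ->
  (\sum_i `|x i|) ^+ 2 <= 3 * \sum_i (x i ^+ 2 / w i).
Proof.
move=> w0 wx w3.
set T := \sum_i `|x i|; set S := \sum_i (x i ^+ 2 / w i).
have T0 : 0 <= T by apply: sumr_ge0 => i _.
have S0 : 0 <= S by apply: sumr_ge0 => i _; apply: divr_ge0 => //; exact: sqr_ge0.
have [T00|Tn0] := eqVneq T 0.
  by rewrite T00 expr0n /=; apply: mulr_ge0.
have Tp : 0 < T by rewrite lt_def Tn0.
have c0 : 0 < T / 3 by apply: divr_gt0.
have H := sum_amgm c0 w0 wx.
rewrite w3 -/S -/T in H.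
have E : S / (2 * (T / 3)) = 3 * S / (2 * T) by field.
rewrite E in H.
have E2 : T * (3 * S / (2 * T)) = 3 * S / 2 by field.
have : T * T <= T * (3 * S / (2 * T) + T / 3 * 3 / 2).
  by apply: ler_wpM2l.
rewrite mulrDr E2 expr2; lra.
Qed.


Lemma KL_ge (C : nat) (p q : 'I_C -> R) : is_prob_vec p -> is_prob_vec q ->
  (((\sum_i `|p i - q i|) ^+ 2 / 2)%:E <= KL p q)%E.
Proof.
move=> [p0 p1] [q0 q1]; rewrite /KL.
apply: (@le_trans _ _ (\sum_(i < C) ((p i - q i) * (5 * p i + q i) / (2 * (p i + 2 * q i)))%:E)%E); last first.
  by apply: lee_sum => i _; apply: kl_term_ge.
rewrite sumEFin lee_fin.
have E : forall i, (p i - q i) * (5 * p i + q i) / (2 * (p i + 2 * q i)) =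
   3 / 2 * ((p i - q i) ^+ 2 / (p i + 2 * q i)) + (p i - q i).
  move=> i; have [w0|wn0] := eqVneq (p i + 2 * q i) 0.
    have pi0 : p i = 0 by have := p0 i; have := q0 i; lra.
    have qi0 : q i = 0 by have := p0 i; have := q0 i; lra.
    by rewrite pi0 qi0 !(mulr0, subr0, add0r, mul0r, expr0n, addr0).
  by field.
rewrite (eq_bigr _ (fun i _ => E i)) big_split /= sumrB p1 q1 subrr addr0 -mulr_sumr.
have h0 : forall i, 0 <= p i + 2 * q i by move=> i; have := p0 i; have := q0 i; lra.
have hx : forall i, p i + 2 * q i = 0 -> p i - q i = 0.
  by move=> i; have := p0 i; have := q0 i; lra.
have h3 : \sum_i (p i + 2 * q i) = 3 by rewrite big_split /= -mulr_sumr p1 q1; lra.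
have := @cs_bound C (fun i => p i - q i) (fun i => p i + 2 * q i) h0 hx h3.
lra.
Qed.

Lemma tv_le (C : nat) (p r : 'I_C -> R) : \sum_i p i = \sum_i r i ->
  0 <= tv_dist p r <= (\sum_i `|p i - r i|) / 2.
Proof.
move=> e; rewrite /tv_dist; apply/andP; split.
  by elim/big_ind: _ => // u v hu hv; rewrite le_max hu.
elim/big_ind: _.
- by apply: divr_ge0 => //; apply: sumr_ge0.
- by move=> u v hu hv; rewrite ge_max hu hv.
move=> A _.
have e0 : \sum_i (p i - r i) = 0 by rewrite sumrB e subrr.
rewrite (bigID (mem A)) /= in e0.
rewrite -sumrB [X in _ <= X / 2](bigID (mem A)) /=.
have h1 := ler_norm_sum (index_enum 'I_C) (fun i => p i - r i) (fun i => true && (i \in A)).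
have h2 := ler_norm_sum (index_enum 'I_C) (fun i => p i - r i) (fun i => true && (i \notin A)).
rewrite /= in h1 h2.
have h3 : `|\sum_(i < C | i \notin A) (p i - r i)| = `|\sum_(i in A) (p i - r i)|.
  by rewrite (_ : \sum_(i < C | i \notin A) (p i - r i) = - \sum_(i in A) (p i - r i)) ?normrN //; lra.
lra.
Qed.


Lemma point (C : nat) (p q r : 'I_C -> R) :
  is_prob_vec p -> is_prob_vec q -> is_prob_vec r ->
  ((tv_dagger p r)%:E <= KL p q + KL q r)%E.
Proof.
move=> hp hq hr.
apply: le_trans (leeD (KL_ge hp hq) (KL_ge hq hr)).
rewrite -EFinD lee_fin /tv_dagger.
have e : \sum_i p i = \sum_i r i by rewrite hp.2 hr.2.
have /andP [t0 t1] := tv_le e.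
have T : \sum_i `|p i - r i| <= \sum_i `|p i - q i| + \sum_i `|q i - r i|.
  by rewrite -big_split; apply: ler_sum => i _; apply: ler_distD.
have T1 : 0 <= \sum_i `|p i - q i| by apply: sumr_ge0.
have T2 : 0 <= \sum_i `|q i - r i| by apply: sumr_ge0.
move: t0 t1 T T1 T2.
move: (tv_dist p r) (\sum_i `|p i - r i|) (\sum_i `|p i - q i|) (\sum_i `|q i - r i|).
move=> a b c d h0 h1 h2 h3 h4.
have h5 : a <= (c + d) / 2 by lra.
have h6 : a ^+ 2 <= ((c + d) / 2) ^+ 2 by rewrite !expr2; apply: ler_pM.
have h7 := sqr_ge0 (c - d).
rewrite !expr2 in h6 h7 *; nra.
Qed.
End S.

Section M.
Variables (R : realType) (d : measure_display) (X : measurableType d).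

Lemma m_bigmax (I : Type) (s : seq I) (F : I -> X -> R) :
  (forall i, measurable_fun setT (F i)) ->
  measurable_fun setT (fun x => \big[Num.max/0]_(i <- s) F i x).
Proof.
move=> mF; elim: s => [|a s IH].
  by under eq_fun do rewrite big_nil; exact: measurable_cst.
under eq_fun do rewrite big_cons.
exact: measurable_realfun.measurable_maxr.
Qed.

Lemma m_tv (C : nat) (a b : X -> 'I_C -> R) :
  (forall i, measurable_fun setT (fun x => a x i)) ->
  (forall i, measurable_fun setT (fun x => b x i)) ->
  measurable_fun setT (fun x => (tv_dagger (a x) (b x))%:E).

Proof.
move=> ma mb; apply/measurable_EFinP; rewrite /tv_dagger.
apply: measurable_funX; rewrite /tv_dist.
apply: m_bigmax => A.
apply: measurableT_comp => //.
apply: measurable_funB.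
  under eq_fun do rewrite big_mkcond /=.
  by apply: measurable_sum => i; case: (i \in A).
under eq_fun do rewrite big_mkcond /=.
by apply: measurable_sum => i; case: (i \in A).
Qed.

Lemma m_kl (a b : X -> R) : measurable_fun setT a -> measurable_fun setT b ->
  (forall x, 0 <= a x) -> (forall x, 0 <= b x) ->
  measurable_fun setT (fun x => kl_term (a x) (b x)).
Proof.
move=> ma mb a0 b0.
rewrite (_ : (fun x => kl_term (a x) (b x)) = fun x => if a x == 0 then 0%E
   else if b x == 0 then +oo%E else (a x * (ln (a x) - ln (b x)))%:E); last first.
  apply/funext => x; rewrite /kl_term.
  have [//|an0] := eqVneq (a x) 0.
  have [//|bn0] := eqVneq (b x) 0.
  by rewrite ln_div // posrE lt_def ?an0 ?bn0 ?a0 ?b0.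
apply: measurable_fun_ifT.
- exact: measurable_fun_eqr.
- exact: measurable_cst.
apply: measurable_fun_ifT.
- exact: measurable_fun_eqr.
- exact: measurable_cst.
apply/measurable_EFinP; apply: measurable_funM => //.
by apply: measurable_funB; apply: measurableT_comp => //; exact: measurable_ln.
Qed.

Lemma m_KL (C : nat) (a b : X -> 'I_C -> R) :
  (forall i, measurable_fun setT (fun x => a x i)) ->
  (forall i, measurable_fun setT (fun x => b x i)) ->
  (forall x, is_prob_vec (a x)) -> (forall x, is_prob_vec (b x)) ->
  measurable_fun setT (fun x => KL (a x) (b x)).
Proof.
move=> ma mb ha hb; rewrite /KL.
apply: emeasurable_sum => i; apply: m_kl => //.
- by move=> x; exact: (ha x).1.
- by move=> x; exact: (hb x).1.
Qed.

End M.
Unset Implicit Arguments. Set Strict Implicit.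

Theorem proposition1 (R : realType) (d : measure_display) (X : measurableType d)
  (C K : nat) (hK : (0 < K)%N)
  (D : 'I_K -> set X) (Pk : 'I_K -> probability X R) (q : 'I_K -> R)
  (P : probability X R)
  (Phistar Phiw : X -> 'I_C -> R) (Phik : 'I_K -> X -> 'I_C -> R)
  (hDm : forall k, measurable (D k))
  (hDdisj : forall k l, k != l -> D k `&` D l = set0)
  (hPkD : forall k, Pk k (D k) = 1%E)
  (hq0 : forall k, 0 <= q k)
  (hq1 : \sum_(k < K) q k = 1)
  (hP : forall A, measurable A -> P A = (\sum_(k < K) (q k)%:E * Pk k A)%E)
  (hPhistar : forall x, is_prob_vec (Phistar x))
  (hPhiw : forall x, is_prob_vec (Phiw x))
  (hPhik : forall k x, is_prob_vec (Phik k x))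
  (mPhistar : forall i, measurable_fun setT (fun x => Phistar x i))
  (mPhiw : forall i, measurable_fun setT (fun x => Phiw x i))
  (mPhik : forall k i, measurable_fun setT (fun x => Phik k x i)) :
  (\int[P]_x (tv_dagger (Phistar x) (Phiw x))%:E <=
     \sum_(k < K) (q k)%:E * \int[Pk k]_(x in D k) KL (Phistar x) (Phik k x)
   + \sum_(k < K) (q k)%:E * \int[Pk k]_(x in D k) KL (Phik k x) (Phiw x))%E.
Proof.
set f := fun x => (tv_dagger (Phistar x) (Phiw x))%:E.
have f0 : forall x, (0 <= f x)%E by move=> x; rewrite lee_fin /tv_dagger sqr_ge0.
have mf : measurable_fun setT f by exact: m_tv.
have mK1 k : measurable_fun setT (fun x => KL (Phistar x) (Phik k x)).
  by apply: m_KL => // i; exact: mPhik.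
have mK2 k : measurable_fun setT (fun x => KL (Phik k x) (Phiw x)).
  by apply: m_KL => // i; exact: mPhik.
have KLge0 (p r : 'I_C -> R) : is_prob_vec p -> is_prob_vec r -> (0 <= KL p r)%E.
  move=> hp hr; apply: le_trans (KL_ge hp hr).
  by rewrite lee_fin; apply: divr_ge0 => //; exact: sqr_ge0.
have hpt k x : (f x <= KL (Phistar x) (Phik k x) + KL (Phik k x) (Phiw x))%E.
  exact: point.
pose m_ : {measure set X -> \bar R}^nat := fun n =>
  match (insub n : option 'I_K) with
  | Some k => (mscale (NngNum (hq0 k)) (Pk k) : {measure set X -> \bar R})
  | None => mzero end.
have stepA : (\int[P]_x f x = \sum_(k < K) (q k)%:E * \int[Pk k]_x f x)%E.
  rewrite (eq_measure_integral (msum m_ K)); last first.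
    move=> A mA _; transitivity (\sum_(k < K) (q k)%:E * Pk k A)%E; first exact: hP.
    rewrite /msum; apply: eq_bigr => k _.
    have hk : (insub (nat_of_ord k) : option 'I_K) = Some k by exact: valK.
    by rewrite /m_ hk.
  rewrite ge0_integral_measure_sum //; apply: eq_bigr => k _.
  have hk : (insub (nat_of_ord k) : option 'I_K) = Some k by exact: valK.
  by rewrite /m_ hk ge0_integral_mscale.
have stepB k (g : X -> \bar R) : measurable_fun setT g -> (forall x, (0 <= g x)%E) ->
    (\int[Pk k]_x g x = \int[Pk k]_(x in D k) g x)%E.
  move=> mg g0.
  rewrite -(setUv (D k)) ge0_integral_setU //; first last.
  - by apply/disj_set2P; rewrite setICr.
  - by rewrite setUv.
  - exact: measurableC.
  rewrite [X in (_ + X)%E]null_set_integral ?adde0 //.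
  - exact: measurableC.
  - exact: measurable_funTS.
  have H := @probability_setC _ _ _ (Pk k) (D k) (hDm k).
  by rewrite hPkD subee // in H.
rewrite stepA -big_split /=; apply: lee_sum => k _.
rewrite -ge0_muleDr; first last.
  - by apply: integral_ge0 => x _; exact: KLge0.
  - by apply: integral_ge0 => x _; exact: KLge0.
apply: lee_wpmul2l; first by rewrite lee_fin.
rewrite stepB // -ge0_integralD //; first last.
  - exact: measurable_funTS.
  - by move=> x _; exact: KLge0.
  - exact: measurable_funTS.
  - by move=> x _; exact: KLge0.
apply: ge0_le_integral => //.
- exact: measurable_funTS.
- apply: emeasurable_funD; exact: measurable_funTS.
Qed.
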